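(* Let $\mathcal{R}_{\mathrm{con}}$ be the set of isomorphism classes of finite connected racks. The homomorphism of abelian groups $$\mathbb{Z}\{\mathcal{R}_{\mathrm{con}}\}\longrightarrow \mathrm{B}(\mathcal{R}),\qquad [R]\longmapsto b(R),$$ from the free abelian group with basis $\mathcal{R}_{\mathrm{con}}$ to the Burnside ring of finite racks, is an isomorphism. In other words, the elements $b(R)$, for $R$ ranging over the finite connected racks up to isomorphism, form an integral basis of $\mathrm{B}(\mathcal{R})$. In particular, the abelian group $\mathrm{B}(\mathcal{R})$ is torsion-free.
   Context: A rack is a set $R$ with a binary operation $\rhd$ such that every left multiplication $\ell_a\colon b\mapsto a\rhd b$ is a bijection and $a\rhd(b\rhd c)=(a\rhd b)\rhd(a\rhd c)$ for all $a,b,c$. Morphisms of racks are maps preserving $\rhd$. The inner automorphism group $\mathrm{Inn}(R)$ is the subgroup of the symmetric group on $R$ generated by all $\ell_a$. A rack is connected if it is non-empty and $\mathrm{Inn}(R)$ acts transitively on $R$. A subrack of $R$ is a subset $S$ with $\ell_s(S)=S$ for all $s\in S$. A decomposition of $R$ into $S$ and $T$ means that $S,T$ are disjoint subracks (possibly empty) with $S\cup T=R$. The Burnside ring of finite racks $\mathrm{B}(\mathcal{R})$ is the abelian group generated by symbols $b(R)$, one for each finite rack $R$, subject to the relations $b(R_1)=b(R_2)$ whenever $R_1\cong R_2$, and $b(R)=b(S)+b(T)$ whenever $R$ decomposes into subracks $S$ and $T$. *)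

(* Defs.v *)
From mathcomp Require Import all_boot all_order all_algebra.
Set Implicit Arguments. Unset Strict Implicit. Unset Printing Implicit Defensive.
Import GRing.Theory Num.Theory.
Local Open Scope ring_scope.

Definition is_rack (T : Type) (op : T -> T -> T) : Prop :=
  (forall a, bijective (op a)) /\
  (forall a b c, op a (op b c) = op (op a b) (op a c)).

(* inn_orbit op x y  <->  y = g x for some g in Inn(R), the group generated
   by the l_a : g is a finite word in the l_a and their inverses
   (z = l_a^{-1} y  iff  op a z = y). *)
Inductive inn_orbit (T : Type) (op : T -> T -> T) (x : T) : T -> Prop :=
  | inn_refl : inn_orbit op x x
  | inn_step (a y : T) : inn_orbit op x y -> inn_orbit op x (op a y)
  | inn_stepV (a y z : T) : inn_orbit op x y -> op a z = y -> inn_orbit op x z.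

Definition rack_connected (T : Type) (op : T -> T -> T) : Prop :=
  (exists x : T, True) /\ (forall x y : T, inn_orbit op x y).

Definition is_subrack (T : Type) (op : T -> T -> T) (S : T -> Prop) : Prop :=
  forall s, S s -> forall z, S z <-> (exists y, S y /\ op s y = z).

Definition decomposes (T : Type) (op : T -> T -> T) (S U : T -> Prop) : Prop :=
  [/\ is_subrack op S, is_subrack op U,
      (forall x, ~ (S x /\ U x)) & (forall x, S x \/ U x)].

Definition rack_hom (A B : Type) (opA : A -> A -> A) (opB : B -> B -> B)
  (f : A -> B) : Prop := forall a b, f (opA a b) = opB (f a) (f b).

Definition iso_onto (A B : Type) (opA : A -> A -> A) (opB : B -> B -> B)
  (S : B -> Prop) (f : A -> B) : Prop :=
  [/\ injective f, (forall y, S y <-> exists x, f x = y) & rack_hom opA opB f].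

Definition frack := {n : nat & {ffun 'I_n -> {ffun 'I_n -> 'I_n}}}.

Definition fop (R : frack) : 'I_(tag R) -> 'I_(tag R) -> 'I_(tag R) :=
  fun a b => tagged R a b.

Definition is_frack (R : frack) : Prop := is_rack (@fop R).

Definition connected_frack (R : frack) : Prop :=
  is_frack R /\ rack_connected (@fop R).

Definition frack_iso (R1 R2 : frack) : bool :=
  [exists f : {ffun 'I_(tag R1) -> 'I_(tag R2)},
    [&& injectiveb f, [forall b, [exists a, f a == b]] &
        [forall a, forall b, f (@fop R1 a b) == @fop R2 (f a) (f b)]]].

(* a formal Z-linear combination  sum_i z_i [R_i] *)
Definition fsum := seq (frack * int).

Definition coef (s : fsum) (R : frack) : int := \sum_(p <- s | p.1 == R) p.2.

Definition scale_fsum (z : int) (s : fsum) : fsum := [seq (p.1, z * p.2) | p <- s].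

Definition neg_fsum (s : fsum) : fsum := scale_fsum (-1) s.

(* the defining relations of B(R) *)
Definition generator (g : fsum) : Prop :=
  (exists R1 R2 : frack,
     [/\ is_frack R1, is_frack R2, frack_iso R1 R2 &
         g = [:: (R1, 1); (R2, -1)]])
  \/
  (exists R S U : frack,
     [/\ is_frack R, is_frack S, is_frack U,
         (exists (PS PU : 'I_(tag R) -> Prop),
            [/\ decomposes (@fop R) PS PU,
                (exists f, iso_onto (@fop S) (@fop R) PS f) &
                (exists f, iso_onto (@fop U) (@fop R) PU f)]) &
         g = [:: (R, 1); (S, -1); (U, -1)]]).

Inductive in_rel : fsum -> Prop :=
  | in_rel_nil : in_rel [::]
  | in_rel_gen (g s : fsum) (z : int) :
      generator g -> in_rel s -> in_rel (scale_fsum z g ++ s)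
  | in_rel_ext (s t : fsum) :
      in_rel s -> (forall R, coef s R = coef t R) -> in_rel t.

(* Main.v *)
Require Import Defs.
From mathcomp Require Import all_boot all_order all_algebra.
From mathcomp Require Import ring.
From Stdlib Require Import Classical ClassicalEpsilon.
Set Implicit Arguments. Unset Strict Implicit. Unset Printing Implicit Defensive.
Import GRing.Theory Num.Theory.
Local Open Scope ring_scope.

Definition Phi (w : frack -> int) (s : fsum) : int := \sum_(p <- s) p.2 * w p.1.

Lemma Phi_undup w s (u : seq frack) : uniq u -> {subset map fst s <= u} ->
  Phi w s = \sum_(R <- u) coef s R * w R.
Proof.
move=> uu su; rewrite /Phi /coef.
transitivity (\sum_(R <- u) \sum_(p <- s) (if p.1 == R then p.2 * w p.1 else 0)).
  rewrite exchange_big /= [LHS]big_seq [RHS]big_seq; apply: eq_bigr => p ps.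
  rewrite -big_mkcond /=.
  transitivity (\sum_(R <- u | p.1 == R) p.2 * w p.1); last first.
    by [].
  rewrite big_const_seq.
  have -> : count (eq_op p.1) u = 1%N.
    rewrite (@eq_count _ _ (pred1 p.1)); last by move=> y /=; rewrite eq_sym.
    rewrite count_uniq_mem //.
    have -> : p.1 \in u by apply: su; apply/mapP; by exists p.
    by [].
  by rewrite /= addr0.
apply: eq_bigr => R _; rewrite big_mkcond /= mulr_suml.
rewrite [RHS]big_mkcond /=; apply: eq_bigr => p _.
by case: (p.1 =P R) => [->|].
Qed.

Lemma Phi_coef w s t : (forall R, coef s R = coef t R) -> Phi w s = Phi w t.
Proof.
move=> e; set u := undup (map fst (s ++ t)).
have uu : uniq u by rewrite undup_uniq.
rewrite (@Phi_undup w s u) ?(@Phi_undup w t u) //.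
- by apply: eq_bigr => R _; rewrite e.
- by move=> x xs; rewrite mem_undup map_cat mem_cat xs orbT.
- by move=> x xs; rewrite mem_undup map_cat mem_cat xs.
Qed.

Lemma Phi_cat w s t : Phi w (s ++ t) = Phi w s + Phi w t.
Proof. by rewrite /Phi big_cat. Qed.

Lemma Phi_scale w z s : Phi w (scale_fsum z s) = z * Phi w s.
Proof. by rewrite /Phi /scale_fsum big_map mulr_sumr; apply: eq_bigr => p _ /=; rewrite mulrA. Qed.

Lemma coef_cat s t R : coef (s ++ t) R = coef s R + coef t R.
Proof. by rewrite /coef big_cat. Qed.

Lemma coef_scale z s R : coef (scale_fsum z s) R = z * coef s R.
Proof. by rewrite /coef /scale_fsum big_map mulr_sumr. Qed.

Lemma coef_neg s R : coef (neg_fsum s) R = - coef s R.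
Proof. by rewrite coef_scale mulN1r. Qed.

Lemma in_rel_coef s t : in_rel s -> (forall R, coef s R = coef t R) -> in_rel t.
Proof. exact: in_rel_ext. Qed.

Lemma in_rel_cat s t : in_rel s -> in_rel t -> in_rel (s ++ t).
Proof.
move=> hs ht; elim: hs => [|g s' z gg _ IH|s' t' _ IH e] //.
  by rewrite -catA; apply: in_rel_gen.
by apply: in_rel_ext IH _ => R; rewrite !coef_cat e.
Qed.

Lemma scale_cat z s t : scale_fsum z (s ++ t) = scale_fsum z s ++ scale_fsum z t.
Proof. exact: map_cat. Qed.

Lemma in_rel_scale z s : in_rel s -> in_rel (scale_fsum z s).
Proof.
elim => [|g s' z' gg _ IH|s' t' _ IH e].
- exact: in_rel_nil.
- apply: in_rel_ext (in_rel_gen (z * z') gg IH) _ => R.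
  by rewrite scale_cat !coef_cat !coef_scale mulrA.
- by apply: in_rel_ext IH _ => R; rewrite !coef_scale e.
Qed.

Lemma in_rel_gen1 g : generator g -> in_rel g.
Proof.
move=> gg; apply: in_rel_ext (in_rel_gen 1 gg in_rel_nil) _ => R.
by rewrite cats0 coef_scale mul1r.
Qed.

Lemma Phi_in_rel w : (forall g, generator g -> Phi w g = 0) ->
  forall s, in_rel s -> Phi w s = 0.
Proof.
move=> hg s; elim => [|g s' z gg _ IH|s' t' _ IH e].
- by rewrite /Phi big_nil.
- by rewrite Phi_cat Phi_scale hg // mulr0 add0r.
- by rewrite -(Phi_coef w e).
Qed.

Definition biso (A B : frack) (f : 'I_(tag A) -> 'I_(tag B)) :=
  bijective f /\ rack_hom (@fop A) (@fop B) f.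

Lemma frack_isoP A B : reflect (exists f, @biso A B f) (frack_iso A B).
Proof.
apply: (iffP existsP) => [[f /and3P[/injectiveP fi /forallP fs /forallP fh]]|[f [fb fh]]].
  exists f; split; last by move=> a b; apply/eqP; have /forallP := fh a; apply.
  apply: inj_card_bij => //.
  rewrite -(card_codom fi); apply: subset_leq_card; apply/subsetP => b _.
  by have /existsP[a /eqP <-] := fs b; apply: codom_f.
exists [ffun x => f x]; apply/and3P; split.
- by apply/injectiveP => x y; rewrite !ffunE; apply: bij_inj.
- apply/forallP => b; have [g _ fg] := fb; apply/existsP; exists (g b).
  by rewrite ffunE fg.
- by apply/forallP => a; apply/forallP => b; rewrite !ffunE fh.
Qed.

Lemma frack_iso_refl A : frack_iso A A.
Proof. by apply/frack_isoP; exists id; split => //; exists id. Qed.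

Lemma frack_iso_sym A B : frack_iso A B -> frack_iso B A.
Proof.
move/frack_isoP=> [f [[g gf fg] fh]]; apply/frack_isoP; exists g; split.
  by exists f.
move=> a b; apply: (can_inj gf); by rewrite fh !fg.
Qed.

Lemma frack_iso_trans A B C : frack_iso A B -> frack_iso B C -> frack_iso A C.
Proof.
move/frack_isoP=> [f [fb fh]] /frack_isoP [g [gb gh]]; apply/frack_isoP.
exists (g \o f); split; first exact: bij_comp.
by move=> a b /=; rewrite fh gh.
Qed.

Definition injhoms (Q C : frack) : {set {ffun 'I_(tag Q) -> 'I_(tag C)}} :=
  [set f : {ffun 'I_(tag Q) -> 'I_(tag C)} | injectiveb f && [forall a, forall b, f (fop a b) == fop (f a) (f b)]].
Definition ninj Q C : nat := #|injhoms Q C|.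

Lemma injhomsP Q C (f : {ffun 'I_(tag Q) -> 'I_(tag C)}) :
  reflect (injective f /\ rack_hom (@fop Q) (@fop C) f) (f \in injhoms Q C).
Proof.
rewrite inE; apply: (iffP andP) => [[/injectiveP fi /forallP fh]|[fi fh]].
  by split => // a b; apply/eqP; have /forallP := fh a; apply.
split; first by apply/injectiveP.
by apply/forallP => a; apply/forallP => b; rewrite fh.
Qed.

Lemma ninj_lt Q C : (tag C < tag Q)%N -> ninj Q C = 0%N.
Proof.
move=> lt; apply/eqP; rewrite cards_eq0; apply/eqP/setP => f; rewrite [RHS]inE.
apply/negP => /injhomsP [fi _]; have := leq_card _ fi.
by rewrite !card_ord leqNgt lt.
Qed.

Lemma ninj_eq Q C : tag C = tag Q -> (0 < ninj Q C)%N -> frack_iso Q C.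
Proof.
move=> e /card_gt0P [f /injhomsP [fi fh]]; apply/frack_isoP; exists f; split => //.
by apply: inj_card_bij => //; rewrite !card_ord e.
Qed.

Lemma ninj_refl Q : (0 < ninj Q Q)%N.
Proof.
apply/card_gt0P; exists [ffun x => x]; apply/injhomsP; split.
  by move=> x y; rewrite !ffunE.
by move=> a b; rewrite !ffunE.
Qed.

Lemma ninj_iso_le Q C C' : frack_iso C C' -> (ninj Q C <= ninj Q C')%N.
Proof.
move/frack_isoP=> [g [[g' gg' _] gh]].
pose F (h : {ffun 'I_(tag Q) -> 'I_(tag C)}) : {ffun 'I_(tag Q) -> 'I_(tag C')} :=
  [ffun x => g (h x)].
have Fi : injective F.
  move=> h1 h2 /ffunP e; apply/ffunP => x; have := e x; rewrite !ffunE.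
  by move/(can_inj gg').
rewrite /ninj -(card_imset _ Fi); apply: subset_leq_card; apply/subsetP => h'.
move/imsetP => [h /injhomsP [hi hh] ->]; apply/injhomsP; split.
  by move=> x y; rewrite !ffunE => /(can_inj gg') /hi.
by move=> a b; rewrite !ffunE hh gh.
Qed.

Lemma ninj_iso Q C C' : frack_iso C C' -> ninj Q C = ninj Q C'.
Proof.
move=> i; apply/eqP; rewrite eqn_leq !ninj_iso_le //; exact: frack_iso_sym.
Qed.

Section Pieces.
Variables (T : Type) (op : T -> T -> T) (PS PU : T -> Prop).
Hypotheses (opi : forall r, injective (op r)) (sS : is_subrack op PS)
  (sU : is_subrack op PU) (dj : forall x, ~ (PS x /\ PU x))
  (cv : forall x, PS x \/ PU x).

Lemma piece_closed r z : PS z -> PS (op r z).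
Proof.
move=> Sz; case: (cv r) => [Sr|Ur].
  by apply/(sS Sr); exists z.
case: (cv (op r z)) => // /(sU Ur) [y [Uy /opi e]].
by case: (@dj z); split => //; rewrite -e.
Qed.

End Pieces.

Lemma piece_back T op (PS PU : T -> Prop) :
  (forall r, injective (op r)) -> is_subrack op PS -> is_subrack op PU ->
  (forall x, ~ (PS x /\ PU x)) -> (forall x, PS x \/ PU x) ->
  forall r z, PS (op r z) -> PS z.
Proof.
move=> opi sS sU dj cv r z Srz; case: (cv z) => // Uz.
have : PU (op r z).
  apply: (@piece_closed _ _ PU PS) => // [x [a b]|x]; first by apply: (dj x).
  by case: (cv x); [right|left].
by move=> Urz; case: (dj (op r z)).
Qed.

Lemma hom_piece (Q : frack) T op (PS PU : T -> Prop) (h : 'I_(tag Q) -> T) x0 :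
  (forall r, injective (op r)) -> is_subrack op PS -> is_subrack op PU ->
  (forall x, ~ (PS x /\ PU x)) -> (forall x, PS x \/ PU x) ->
  rack_connected (@fop Q) -> rack_hom (@fop Q) op h ->
  PS (h x0) -> forall y, PS (h y).
Proof.
move=> opi sS sU dj cv [_ cQ] hh S0 y; elim: (cQ x0 y) => // [a y' _ IH|a y' z _ IH e].
  by rewrite hh; apply: (piece_closed opi sS sU dj cv).
apply: (piece_back opi sS sU dj cv (r := h a)); by rewrite -hh e.
Qed.

Lemma count_piece (Q R S : frack) (PS PU : 'I_(tag R) -> Prop)
  (fS : 'I_(tag S) -> 'I_(tag R)) (x0 : 'I_(tag Q)) :
  (forall r, injective (@fop R r)) -> is_subrack (@fop R) PS ->
  is_subrack (@fop R) PU ->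
  (forall x, ~ (PS x /\ PU x)) -> (forall x, PS x \/ PU x) ->
  rack_connected (@fop Q) -> iso_onto (@fop S) (@fop R) PS fS ->
  #|injhoms Q R :&: [set h : {ffun 'I_(tag Q) -> 'I_(tag R)} | [exists x, fS x == h x0]]| = ninj Q S.
Proof.
move=> opi sS sU dj cv cQ [fi fP fh].
pose F (g : {ffun 'I_(tag Q) -> 'I_(tag S)}) : {ffun 'I_(tag Q) -> 'I_(tag R)} :=
  [ffun x => fS (g x)].
have Fi : injective F.
  move=> h1 h2 /ffunP e; apply/ffunP => x; have := e x; rewrite !ffunE.
  by move/fi.
rewrite /ninj -(card_imset _ Fi); apply: eq_card => h.
apply/idP/idP.
  rewrite inE => /andP [/injhomsP [hi hh]]; rewrite inE => /existsP [x1 /eqP e1].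
  have allS : forall y, PS (h y).
    apply: (hom_piece (x0 := x0) opi sS sU dj cv cQ hh); rewrite -e1; apply/fP; by exists x1.
  have pre : forall y, exists x, fS x == h y.
    by move=> y; have /fP [x <-] := allS y; exists x.
  pose g := [ffun y => odflt x1 [pick x | fS x == h y]].
  have fg : forall y, fS (g y) = h y.
    move=> y; rewrite ffunE; case: pickP => [x /eqP //|].
    by have [x xe] := pre y => /(_ x); rewrite xe.
  apply/imsetP; exists g; last by apply/ffunP => y; rewrite ffunE fg.
  apply/injhomsP; split.
    by move=> a b e; apply: hi; rewrite -!fg e.
  by move=> a b; apply: fi; rewrite fh !fg hh.
move/imsetP => [g /injhomsP [gi gh] ->]; rewrite in_setI; apply/andP; split.
  apply/injhomsP; split.
    by move=> a b; rewrite !ffunE => /fi /gi.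
  by move=> a b; rewrite !ffunE gh fh.
by rewrite inE; apply/existsP; exists (g x0); rewrite ffunE.
Qed.

Lemma ninj_decomp (Q R S U : frack) (PS PU : 'I_(tag R) -> Prop) fS fU :
  is_frack R -> connected_frack Q -> decomposes (@fop R) PS PU ->
  iso_onto (@fop S) (@fop R) PS fS -> iso_onto (@fop U) (@fop R) PU fU ->
  ninj Q R = (ninj Q S + ninj Q U)%N.
Proof.
move=> [bij _] [_ cQ] [sS sU dj cv] iS iU.
have opi : forall r, injective (@fop R r) by move=> r; apply: bij_inj; apply: bij.
have [[x0 _] _] := cQ.
have dj' : forall x, ~ (PU x /\ PS x) by move=> x [a b]; apply: (dj x).
have cv' : forall x, PU x \/ PS x by move=> x; case: (cv x); [right|left].
rewrite -(count_piece x0 opi sS sU dj cv cQ iS) -(count_piece x0 opi sU sS dj' cv' cQ iU).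
rewrite /ninj -(cardsID [set h : {ffun 'I_(tag Q) -> 'I_(tag R)} | [exists x, fS x == h x0]] (injhoms Q R)).
congr (_ + _)%N; apply: eq_card => h; rewrite in_setD in_setI.
case: (h \in injhoms Q R); rewrite ?andbF ?andbT //= !inE.
case: iS => [_ fSP _]; case: iU => [_ fUP _].
apply/idP/idP.
  move=> nS; apply/existsP; case: (cv' (h x0)) => [/fUP [x <-]|/fSP [x e]].
    by exists x.
  by move: nS; rewrite negb_exists => /forallP /(_ x); rewrite e eqxx.
move/existsP => [x /eqP e]; apply/negP => /existsP [y /eqP e'].
by apply: (dj (h x0)); split; [apply/fSP; exists y|apply/fUP; exists x].
Qed.

Definition wQ (Q : frack) (C : frack) : int := (ninj Q C)%:Z.

Lemma gen_Phi Q : connected_frack Q -> forall g, generator g -> Phi (wQ Q) g = 0.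
Proof.
move=> cQ g [[R1 [R2 [_ _ i ->]]]|[R [S [U [fR _ _ [PS [PU [dc [fS iS] [fU iU]]]] ->]]]]].
  rewrite /Phi !big_cons big_nil /= /wQ (ninj_iso Q i).
  by rewrite mul1r mulN1r addr0 subrr.
rewrite /Phi !big_cons big_nil /= /wQ (ninj_decomp fR cQ dc iS iU).
rewrite !mul1r !mulN1r addr0 PoszD -opprD; exact: subrr.
Qed.

Lemma Phi_rel Q s : connected_frack Q -> in_rel s -> Phi (wQ Q) s = 0.
Proof. by move=> cQ; apply: Phi_in_rel; apply: gen_Phi. Qed.

Definition csum (t : fsum) R := \sum_(p <- t | frack_iso p.1 R) p.2.

Lemma max_elem (t : fsum) : t != [::] ->
  exists2 p0, p0 \in t & forall p, p \in t -> (tag p.1 <= tag p0.1)%N.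
Proof.
elim: t => // p t IH _; case: (altP (t =P [::])) => [->|tn].
  by exists p => [|q]; rewrite ?mem_seq1 ?inE // => /eqP ->.
have [p0 p0t mx] := IH tn.
case: (leqP (tag p.1) (tag p0.1)) => le.
  exists p0; first by rewrite inE p0t orbT.
  by move=> q; rewrite inE => /orP [/eqP ->|/mx].
exists p; first by rewrite inE eqxx.
move=> q; rewrite inE => /orP [/eqP ->//|/mx h]; exact: leq_trans h (ltnW le).
Qed.

Lemma Phi_split w (t : fsum) (a : pred frack) :
  Phi w t = Phi w (filter (fun p => a p.1) t) + Phi w (filter (fun p => ~~ a p.1) t).
Proof. by rewrite /Phi !big_filter (bigID (fun p => a p.1)). Qed.

Lemma inj_part : forall t : fsum, {in t, forall p, connected_frack p.1} ->
  (forall Q, connected_frack Q -> Phi (wQ Q) t = 0) ->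
  forall R, connected_frack R -> csum t R = 0.
Proof.
move=> t; have [n] := ubnP (size t); elim: n t => // n IH t szt tc tP R cR.
case: (altP (t =P [::])) => [->|tn]; first by rewrite /csum big_nil.
have [p0 p0t mx] := max_elem tn; set R0 := p0.1.
have cR0 : connected_frack R0 by apply: tc.
have w0 : forall p, p \in t ->
   wQ R0 p.1 = if frack_iso p.1 R0 then wQ R0 R0 else 0.
  move=> p pt; case: ifP => ip.
    by rewrite /wQ (ninj_iso R0 (frack_iso_sym ip)).
  have := mx p pt; rewrite leq_eqVlt => /orP [/eqP e|lt]; last by rewrite /wQ ninj_lt.
  rewrite /wQ; case: (posnP (ninj R0 p.1)) => [->//|pos].
  by have := ninj_eq e pos => /frack_iso_sym; rewrite ip.
have c0 : csum t R0 = 0.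
  have := tP R0 cR0; rewrite /Phi big_seq (eq_bigr (fun p => p.2 * (if frack_iso p.1 R0 then wQ R0 R0 else 0))); last first.
    by move=> p pt; rewrite w0.
  rewrite -big_seq.
  under eq_bigr => p _ do rewrite fun_if mulr0.
  rewrite -big_mkcond /= -mulr_suml => /eqP; rewrite mulf_eq0 => /orP [/eqP //|].
  by rewrite /wQ; move/eqP; case: (ninj R0 R0) (ninj_refl R0).
pose t' := filter (fun p => ~~ frack_iso p.1 R0) t.
have szt' : (size t' < n)%N.
  apply: (@leq_trans (size t)); last by rewrite -ltnS.
  rewrite /t' size_filter -(count_predC (fun p => ~~ frack_iso p.1 R0) t).
  rewrite -addn1 leq_add2l -has_count; apply/hasP; exists p0 => //=.
  by rewrite negbK frack_iso_refl.
have t'c : {in t', forall p, connected_frack p.1}.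
  by move=> p; rewrite mem_filter => /andP [_ /tc].
have t'P : forall Q, connected_frack Q -> Phi (wQ Q) t' = 0.
  move=> Q cQ; have := tP Q cQ; rewrite (Phi_split _ _ (fun C => frack_iso C R0)).
  suff -> : Phi (wQ Q) [seq p <- t | frack_iso p.1 R0] = 0 by rewrite add0r.
  rewrite /Phi big_filter (eq_bigr (fun p => p.2 * wQ Q R0)); last first.
    by move=> p ip; rewrite /wQ (ninj_iso Q ip).
  by rewrite -mulr_suml -/(csum t R0) c0 mul0r.
case: (boolP (frack_iso R R0)) => iR.
  rewrite -c0; apply: eq_bigl => p; apply/idP/idP => h.
    exact: frack_iso_trans h iR.
  exact: frack_iso_trans h (frack_iso_sym iR).
rewrite -(IH t' szt' t'c t'P R cR) /csum /t' big_filter_cond; apply: eq_bigl => p.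
case: (boolP (frack_iso p.1 R)) => ip; rewrite ?andbF ?andbT //.
apply/esym/negP => ip0; move/negP: iR; apply; exact: frack_iso_trans (frack_iso_sym ip) ip0.
Qed.

Definition mkfrack (T : finType) (op : T -> T -> T) : frack :=
  existT _ #|T| [ffun a => [ffun b => enum_rank (op (enum_val a) (enum_val b))]].

Lemma mkfrack_hom (T : finType) (op : T -> T -> T) :
  rack_hom (@fop (mkfrack op)) op enum_val.
Proof. by move=> a b; rewrite /fop /= !ffunE enum_rankK. Qed.

Lemma inj_hom_rack (A : frack) (B : Type) (opB : B -> B -> B) f :
  is_rack opB -> injective f -> rack_hom (@fop A) opB f -> is_frack A.
Proof.
move=> [bB dB] fi fh; split.
  move=> a; apply: injF_bij => x y e.
  have := congr1 f e; rewrite !fh => /(bij_inj (bB (f a))); exact: fi.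
by move=> a b c; apply: fi; rewrite !fh dB.
Qed.

Section Sub.
Variables (R : frack) (P : pred 'I_(tag R)).
Hypothesis Pc : forall x y, P x -> P y -> P (fop x y).

Definition subT := {x : 'I_(tag R) | P x}.
Definition subop (x y : subT) : subT := insubd x (fop (val x) (val y)).
Definition subfr : frack := mkfrack subop.
Definition subf (i : 'I_(tag subfr)) : 'I_(tag R) := val (enum_val i).

Lemma subf_iso : iso_onto (@fop subfr) (@fop R) (fun y => P y) subf.
Proof.
split.
- move=> i j /val_inj; exact: enum_val_inj.
- move=> y; split => [Py|[x <-]]; last by rewrite /subf; exact: (valP (enum_val x)).
  exists (enum_rank (Sub y Py : subT)); by rewrite /subf enum_rankK.
- move=> a b; rewrite /subf mkfrack_hom /subop insubdK //.
  by apply: Pc; apply: valP.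
Qed.

Lemma subfr_rack : is_frack R -> is_frack subfr.
Proof. by move=> rR; have [fi _ fh] := subf_iso; exact: inj_hom_rack rR fi fh. Qed.

Lemma subfr_size : tag subfr = #|P|.
Proof. by rewrite /= card_sig. Qed.

End Sub.

Definition pb (P : Prop) : bool := if excluded_middle_informative P then true else false.
Lemma pbP P : reflect P (pb P).
Proof. by rewrite /pb; case: excluded_middle_informative => h; constructor. Qed.

Lemma coef_cons p s R : coef (p :: s) R = (p.1 == R)%:R * p.2 + coef s R.
Proof. by rewrite /coef big_cons; case: eqP => _; rewrite ?mul1r ?mul0r ?add0r. Qed.

Lemma empty_rel (R : frack) : tag R = 0%N -> is_frack R -> in_rel [:: (R, 1)].
Proof.
move=> e fR.
have gg : generator [:: (R, 1); (R, -1); (R, -1)].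
  right; exists R, R, R; split => //.
  have nox : forall y : 'I_(tag R), False by move=> y; have := ltn_ord y; move: (nat_of_ord y); rewrite e.
  have io : iso_onto (@fop R) (@fop R) (fun _ => False) id.
    split => // y; case: (nox y).
  exists (fun _ => False), (fun _ => False); split.
    by split => // [s []|s []|x []|x]; case: (nox x).
  by exists id. by exists id.
apply: in_rel_ext (in_rel_gen (-1) gg in_rel_nil) _ => R'.
rewrite cats0 coef_scale !coef_cons /coef big_nil /=; ring.
Qed.

Lemma coef_nil R : coef [::] R = 0.
Proof. by rewrite /coef big_nil. Qed.

Lemma inv_subrack (R : frack) (Q : pred 'I_(tag R)) :
  is_frack R -> (forall r y, Q (fop r y) = Q y) -> is_subrack (@fop R) (fun y => Q y).
Proof.
move=> [bij _] Qi s _ z; split => [Qz|[y [Qy <-]]]; last by rewrite Qi.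
have [g _ gK] := bij s; exists (g z); by rewrite -(Qi s) gK.
Qed.

Lemma surj1 (R : frack) : is_frack R ->
  exists t, {in t, forall p, connected_frack p.1} /\ in_rel ((R, 1) :: neg_fsum t).
Proof.
have [n] := ubnP (tag R); elim: n R => // n IH R szR fR.
case: (posnP (tag R)) => [e0|pos].
  by exists [::]; split => //; exact: empty_rel.
case: (classic (forall x y, inn_orbit (@fop R) x y)) => [con|ncon].
  exists [:: (R, 1)]; split.
    move=> p; rewrite mem_seq1 => /eqP -> /=; split => //; split => //.
    by exists (Ordinal pos).
  apply: in_rel_ext in_rel_nil _ => R'.
  by rewrite coef_cons coef_neg coef_cons !coef_nil /=; ring.
have [x0 /not_all_ex_not [y0 ny0]] := not_all_ex_not _ _ ncon.
pose P := fun y => pb (inn_orbit (@fop R) x0 y).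
have Pi : forall r y, P (fop r y) = P y.
  move=> r y; apply/pbP/pbP => h; last exact: inn_step.
  exact: inn_stepV h erefl.
have Pc1 : forall x y, P x -> P y -> P (fop x y) by move=> x y _; rewrite Pi.
have Pc2 : forall x y, (predC P) x -> (predC P) y -> (predC P) (fop x y).
  by move=> x y _ /=; rewrite Pi.
have Pi2 : forall r y, (predC P) (fop r y) = (predC P) y by move=> r y /=; rewrite Pi.
set S := subfr P; set U := subfr (predC P).
have fS := subfr_rack Pc1 fR; have fU := subfr_rack Pc2 fR.
have y0P : y0 \in [predC P] by rewrite inE /=; apply/pbP.
have x0P : x0 \in P by rewrite unfold_in /P; apply/pbP; exact: inn_refl.
have ltS : (tag S < n)%N.
  rewrite subfr_size; apply: (@leq_trans (tag R)); last by rewrite -ltnS.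
  rewrite -[X in (_ < X)%N]card_ord -(cardC P) -[X in (X < _)%N]addn0 ltn_add2l.
  by apply/card_gt0P; exists y0.
have ltU : (tag U < n)%N.
  rewrite subfr_size; apply: (@leq_trans (tag R)); last by rewrite -ltnS.
  rewrite -[X in (_ < X)%N]card_ord -(cardC (predC P)) -[X in (X < _)%N]addn0 ltn_add2l.
  by apply/card_gt0P; exists x0; rewrite !inE /= negbK.
have [tS [tSc hS]] := IH S ltS fS.
have [tU [tUc hU]] := IH U ltU fU.
have gg : generator [:: (R, 1); (S, -1); (U, -1)].
  right; exists R, S, U; split => //.
  exists (fun y => P y), (fun y => (predC P) y); split.
  - split; [exact: inv_subrack| exact: inv_subrack | |].
      by move=> x /= [->].
    by move=> x /=; case: (P x); [left|right].
  - by exists (subf (P := P)); apply: subf_iso.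
  - by exists (subf (P := predC P)); apply: subf_iso.
exists (tS ++ tU); split.
  by move=> p; rewrite mem_cat => /orP [/tSc|/tUc].
apply: in_rel_ext (in_rel_cat (in_rel_gen1 gg) (in_rel_cat hS hU)) _ => R'.
rewrite !coef_cat !coef_cons !coef_neg !coef_cat !coef_nil /=; ring.
Qed.

Lemma coef_split (t : fsum) (a : pred frack) R :
  coef t R = coef (filter (fun p => a p.1) t) R + coef (filter (fun p => ~~ a p.1) t) R.
Proof. by rewrite /coef !big_filter_cond (bigID (fun p => a p.1)); congr (_ + _); apply: eq_bigl => p; rewrite andbC. Qed.

Lemma csum_scale z t R : csum (scale_fsum z t) R = z * csum t R.
Proof. by rewrite /csum /scale_fsum big_map mulr_sumr. Qed.

Lemma class_rel R0 (c : fsum) : is_frack R0 ->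
  (forall p, p \in c -> is_frack p.1 /\ frack_iso p.1 R0) ->
  in_rel (c ++ [:: (R0, - \sum_(p <- c) p.2)]).
Proof.
move=> f0; elim: c => [|p c IH] hc.
  apply: in_rel_ext in_rel_nil _ => R; rewrite /= big_nil coef_cons !coef_nil /=; ring.
have [fp ip] := hc p (mem_head _ _).
have gg : generator [:: (p.1, 1); (R0, -1)] by left; exists p.1, R0; split.
have := in_rel_gen p.2 gg (IH (fun q qc => hc q (@mem_behead _ (p :: c) q qc))).
move/in_rel_ext; apply => R.
rewrite /= big_cons !(coef_cat, coef_cons, coef_scale, coef_nil) /=; ring.
Qed.

Lemma all_zero_rel : forall t : fsum, {in t, forall p, connected_frack p.1} ->
  (forall R, connected_frack R -> csum t R = 0) -> in_rel t.
Proof.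
move=> t; have [n] := ubnP (size t); elim: n t => // n IH t szt tc tP.
case: t szt tc tP => [|p0 t0] szt tc tP; first exact: in_rel_nil.
set t := p0 :: t0 in szt tc tP *; set R0 := p0.1.
have cR0 : connected_frack R0 by apply: tc; exact: mem_head.
pose c := filter (fun p => frack_iso p.1 R0) t.
pose t' := filter (fun p => ~~ frack_iso p.1 R0) t.
have hc : in_rel c.
  have := @class_rel R0 c cR0.1.
  have -> : \sum_(p <- c) p.2 = 0 by rewrite /c big_filter; exact: tP.
  move=> h; apply: in_rel_ext (h _) _.
    by move=> p; rewrite mem_filter => /andP [ip /tc [fp _]].
  by move=> R; rewrite coef_cat coef_cons coef_nil /=; ring.
have szt' : (size t' < n)%N.
  apply: (@leq_trans (size t)); last by rewrite -ltnS.
  rewrite /t' size_filter -(count_predC (fun p => ~~ frack_iso p.1 R0) t).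
  rewrite -addn1 leq_add2l -has_count; apply/hasP; exists p0; first exact: mem_head.
  by rewrite /= negbK frack_iso_refl.
have t'c : {in t', forall p, connected_frack p.1}.
  by move=> p; rewrite mem_filter => /andP [_ /tc].
have t'P : forall R, connected_frack R -> csum t' R = 0.
  move=> R cR; case: (boolP (frack_iso R R0)) => iR.
    rewrite /csum /t' big_filter_cond big1 // => p /andP [ni ip].
    by case/negP: ni; exact: frack_iso_trans ip iR.
  rewrite -(tP R cR) /csum /t' big_filter_cond; apply: eq_bigl => p.
  case: (boolP (frack_iso p.1 R)) => ip; rewrite ?andbF ?andbT //.
  apply/negP => ip0; move/negP: iR; apply; exact: frack_iso_trans (frack_iso_sym ip) ip0.
apply: in_rel_ext (in_rel_cat hc (IH t' szt' t'c t'P)) _ => R.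
by rewrite coef_cat [RHS](coef_split _ (fun C => frack_iso C R0)).
Qed.

Lemma part1 : forall s : fsum, {in s, forall p, is_frack p.1} ->
     exists t : fsum, {in t, forall p, connected_frack p.1} /\
                      in_rel (s ++ neg_fsum t).
Proof.
elim => [|[R z] s IH] hs.
  by exists [::]; split => //; exact: in_rel_nil.
have [ts [tsc hts]] := IH (fun q qs => hs q (@mem_behead _ ((R, z) :: s) q qs)).
have [tR [tRc htR]] := surj1 (hs (R, z) (mem_head _ _)).
exists (scale_fsum z tR ++ ts); split.
  move=> p; rewrite mem_cat => /orP [/mapP [q qt ->]|/tsc //].
  exact: (tRc q qt).
apply: in_rel_ext (in_rel_cat (in_rel_scale z htR) hts) _ => R'.
rewrite /= !(coef_cat, coef_cons, coef_neg, coef_scale, coef_nil) /=; ring.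
Qed.

Theorem theorem4p1 :
  (* surjectivity of Z{R_con} -> B(R) *)
  (forall s : fsum, {in s, forall p, is_frack p.1} ->
     exists t : fsum, {in t, forall p, connected_frack p.1} /\
                      in_rel (s ++ neg_fsum t))
  /\
  (* injectivity: a combination of connected racks that vanishes in B(R)
     has zero coefficient on every isomorphism class *)
  (forall t : fsum, {in t, forall p, connected_frack p.1} -> in_rel t ->
     forall R : frack, connected_frack R ->
       \sum_(p <- t | frack_iso p.1 R) p.2 = 0)
  /\
  (* in particular, B(R) is torsion-free *)
  (forall (s : fsum) (n : nat), {in s, forall p, is_frack p.1} -> (0 < n)%N ->
     in_rel (scale_fsum n%:Z s) -> in_rel s).
Proof.
have p2 : forall t : fsum, {in t, forall p, connected_frack p.1} -> in_rel t ->
     forall R : frack, connected_frack R -> csum t R = 0.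
  move=> t tc h; apply: inj_part => // Q cQ; exact: Phi_rel.
split; first exact: part1.
split; first exact: p2.
move=> s n hs n0 hn.
have [t [tc h1]] := part1 hs.
have hnt : in_rel (scale_fsum n%:Z t).
  apply: in_rel_ext (in_rel_cat hn (in_rel_scale (- n%:Z) h1)) _ => R.
  rewrite !(coef_cat, coef_neg, coef_scale); ring.
have ht : in_rel t.
  apply: all_zero_rel => // R cR.
  have tnc : {in scale_fsum n%:Z t, forall p, connected_frack p.1}.
    move=> p /mapP [q qt ->]; exact: (tc q qt).
  have := p2 _ tnc hnt R cR; rewrite csum_scale => /eqP.
  rewrite mulf_eq0 => /orP [|/eqP //].
  by case: n n0 {hn hnt tnc}.
apply: in_rel_ext (in_rel_cat h1 ht) _ => R.
rewrite !(coef_cat, coef_neg); ring.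
Qed.
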